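(* Let $d\in\mathbb{Z}^+$ and $e\in\{1,\dots,d-1\}$. For every $B\in\mathcal{N}_d(\mathbb{R}^2)$, \[ |\mathcal{C}_{d,e}(B)|<2^{2^{d+2}}. \]
   Context: For $k\in\mathbb{Z}^+$, a curve of degree $k$ is the zero set in $\mathbb{R}^2$ of a polynomial in $\mathbb{R}[x,y]$ of degree exactly $k$; $\mathcal{C}_k$ is the family of such curves. For $k\in\mathbb{Z}^+$ let $I_k=\{(i,j)\in\mathbb{Z}_{\ge 0}^2: 1\le i+j\le k\}$ and $\psi_k:\mathbb{R}^2\to\mathbb{R}^{\binom{k+2}{2}-1}$, $\psi_k(a_1,a_2)=(a_1^ia_2^j)_{(i,j)\in I_k}$; $\dim S$ is the dimension of the affine hull of $S$ ($\dim\emptyset=-1$). For $A\subseteq\mathbb{R}^2$, $\mathcal{N}_d(A)$ is the family of $B\subseteq A$ with $|B|=\binom{d+2}{2}-3$ such that: (a) $\dim\psi_d(B)=\binom{d+2}{2}-4$; (b) for all $e\in\{1,\dots,d-1\}$ and $C\in\mathcal{C}_e$, $|B\cap C|<\binom{d+2}{2}-\binom{d-e+2}{2}$; (c) for all $e\in\{1,\dots,d-1\}$ and $C\in\mathcal{C}_e$ with $|B\cap C|=\binom{d+2}{2}-\binom{d-e+2}{2}-1$, $\dim\psi_{d-e}(B\setminus C)=\binom{d-e+2}{2}-3$; (d) for all $e\in\{1,\dots,d-1\}$ and $C\in\mathcal{C}_e$ with $|B\cap C|<\binom{d+2}{2}-\binom{d-e+2}{2}-1$, $\dim\psi_{d-e}(B\setminus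 C)>\binom{d-e+2}{2}-3$. For $B\subseteq\mathbb{R}^2$, $\mathcal{C}_{d,e}(B):=\{C\in\mathcal{C}_e: |C\cap B|=\binom{d+2}{2}-\binom{d-e+2}{2}-1\}$. *)

(* Defs.v *)
From HB Require Import structures.
From mathcomp Require Import all_boot all_order all_algebra.
From mathcomp Require Import reals.
From mathcomp Require Import mpoly.
Set Implicit Arguments. Unset Strict Implicit. Unset Printing Implicit Defensive.
Import Order.TTheory GRing.Theory Num.Theory.
Local Open Scope ring_scope.

Section Defs.
Variable R : realType.

(* point of R^2 as a valuation of the two variables x (='X_0), y (='X_1) *)
Definition pt_val (a : R * R) : 'I_2 -> R :=
  fun i => if val i == 0%N then a.1 else a.2.

Definition zeroset (p : {mpoly R[2]}) : pred (R * R) :=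
  fun a => p.@[pt_val a] == 0.

(* C \in C_k : C is the zero set of a polynomial of degree exactly k
   (msize p = 1 + total degree of p) *)
Definition is_curve (k : nat) (C : pred (R * R)) : Prop :=
  exists p : {mpoly R[2]}, msize p = k.+1 /\ C =1 zeroset p.

Definition exps (k : nat) : seq (nat * nat) :=
  [seq ij <- [seq (i, j) | i <- iota 0 k.+1, j <- iota 0 k.+1]
     | (0 < ij.1 + ij.2 <= k)%N].

Definition psi (k : nat) (a : R * R) : 'rV[R]_(size (exps k)) :=
  \row_(t < size (exps k))
     (a.1 ^+ (nth (0%N, 0%N) (exps k) t).1 * a.2 ^+ (nth (0%N, 0%N) (exps k) t).2).

(* dimension of the affine hull of a finite set of vectors (given as a list);
   -1 for the empty set *)
Definition affdim (n : nat) (s : seq 'rV[R]_n) : int :=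
  if s is v0 :: _ then (\dim <<[seq v - v0 | v <- s]>>%VS)%:Z else (-1)%R.

Definition dimpsi (k : nat) (S : seq (R * R)) : int :=
  affdim [seq psi k a | a <- S].

Definition bnm (k : nat) : int := ('C(k.+2, 2))%:Z.

(* B \in N_d(R^2); B is a finite set given as a duplicate-free list *)
Definition in_Nd (d : nat) (B : seq (R * R)) : Prop :=
  [/\ uniq B /\ (size B)%:Z = bnm d - 3,
      dimpsi d B = bnm d - 4,
      (forall e C, (1 <= e <= d - 1)%N -> is_curve e C ->
         (count C B)%:Z < bnm d - bnm (d - e)),
      (forall e C, (1 <= e <= d - 1)%N -> is_curve e C ->
         (count C B)%:Z = bnm d - bnm (d - e) - 1 ->
         dimpsi (d - e) (filter (predC C) B) = bnm (d - e) - 3) &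
      (forall e C, (1 <= e <= d - 1)%N -> is_curve e C ->
         (count C B)%:Z < bnm d - bnm (d - e) - 1 ->
         dimpsi (d - e) (filter (predC C) B) > bnm (d - e) - 3)].

Definition in_Cde (d e : nat) (B : seq (R * R)) (C : pred (R * R)) : Prop :=
  is_curve e C /\ (count C B)%:Z = bnm d - bnm (d - e) - 1.

End Defs.

(* Main.v *)
Require Import Defs.
From HB Require Import structures.
From mathcomp Require Import all_boot all_order all_algebra.
From mathcomp Require Import reals.
From mathcomp Require Import mpoly.
From mathcomp Require Import zify.
Import Order.TTheory GRing.Theory Num.Theory.
Local Open Scope ring_scope.

Lemma key (R : realType) (d e : nat) (B : seq (R * R)) (C1 C2 : pred (R * R)) :
  (1 <= e <= d - 1)%N -> in_Nd d B -> in_Cde d e B C1 -> in_Cde d e B C2 ->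
  {in B, C1 =1 C2} -> C1 =1 C2.
Proof.
move=> he [[uB szB] _ Hb _ _] [[p1 [s1 E1]] c1] [[p2 [s2 E2]] c2] eqB.
have bpos : forall k, (0 < bnm k)%R.
  by move=> k; rewrite /bnm ltz_nat bin_gt0.
have [t tB nt] : exists2 t, t \in B & ~~ C1 t.
  apply/hasP; rewrite has_count.
  have := count_predC C1 B.
  have b3 : (3 <= bnm (d - e))%R.
    by rewrite /bnm (_ : 3 = ('C(3,2))%:Z) // lez_nat leq_bin2l //; lia.
  move: b3 c1 szB => /=; set bd := bnm d; set be := bnm (d - e).
  move=> h1 h2 h3 h4; change (0 < count (predC C1) B)%N; lia.
have nt2 : ~~ C2 t by rewrite -eqB.
pose a := p2.@[pt_val t]; pose b := p1.@[pt_val t].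
have a0 : a != 0 by move: nt2; rewrite E2.
have b0 : b != 0 by move: nt; rewrite E1.
pose p := a *: p1 - b *: p2.
have [p0|pn0] := eqVneq p 0.
  move=> x; rewrite E1 E2 /zeroset.
  have : p.@[pt_val x] = 0 by rewrite p0 meval0.
  rewrite mevalB !mevalZ => /eqP; rewrite subr_eq0 => /eqP h.
  have -> : (p1.@[pt_val x] == 0) = (a * p1.@[pt_val x] == 0).
    by rewrite mulf_eq0 (negbTE a0).
  by rewrite h mulf_eq0 (negbTE b0).
exfalso.
have pt0 : p.@[pt_val t] = 0 by rewrite mevalB !mevalZ -/a -/b mulrC subrr.
have sp : (msize p <= e.+1)%N.
  apply: leq_trans (msizeD_le _ _) _; rewrite msizeN geq_max.
  by rewrite (leq_trans (msizeZ_le _ _)) ?s1 // (leq_trans (msizeZ_le _ _)) ?s2.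
have sp1 : msize p != 1%N.
  apply/negP => /msize_poly1P [c c0 pc].
  by move: pt0; rewrite pc mevalC; apply/eqP.
have sp0 : msize p != 0%N by rewrite msize_poly_eq0.
set e' := (msize p).-1.
have he' : (1 <= e' <= d - 1)%N by rewrite /e'; lia.
have cur : is_curve e' (zeroset p).
  by exists p; split => //; rewrite /e'; lia.
have := Hb e' _ he' cur.
have le : ((count C1 B).+1 <= count (zeroset p) B)%N.
  pose a2 := predU (predI C1 C2) (pred1 t).
  have sub : subpred a2 (zeroset p).
    move=> x /orP [/andP [h1 h2]|/eqP ->]; last by rewrite /zeroset pt0.
    move: h1 h2; rewrite E1 E2 /zeroset => /eqP h1 /eqP h2.
    by rewrite mevalB !mevalZ h1 h2 !mulr0 subrr.
  apply: leq_trans (sub_count sub B).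
  have := count_predUI (predI C1 C2) (pred1 t) B.
  have -> : count (predI (predI C1 C2) (pred1 t)) B = 0%N.
    rewrite (eq_count (a2 := pred0)) ?count_pred0 //.
    by move=> x /=; case: eqP => [->|]; rewrite ?andbF // (negbTE nt).
  have -> : count (predI C1 C2) B = count C1 B.
    by apply: eq_in_count => x xB /=; rewrite -eqB // andbb.
  have : (0 < count (pred1 t) B)%N by rewrite -has_count has_pred1.
  rewrite /a2 addn0 => h1 ->; by rewrite -{1}[count C1 B]addn0 ltn_add2l.
have mono : (bnm (d - e) <= bnm (d - e'))%R.
  by rewrite /bnm lez_nat leq_bin2l // ltnS; lia.
move: le c1 mono; set bd := bnm d; set be := bnm (d - e); set be' := bnm (d - e').
move=> *; lia.
Qed.

Lemma binle (m k : nat) : ('C(m, k) <= 2 ^ m)%N.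
Proof.
elim: m k => [|m IH] [|k] //; first by rewrite bin0 expn_gt0.
rewrite binS expnS mul2n -addnn; apply: leq_add; apply: IH.
Qed.

Theorem lemma29 (R : realType) (d e : nat) (B : seq (R * R)) :
  (0 < d)%N -> (1 <= e <= d - 1)%N -> in_Nd d B ->
  forall Cs : seq (pred (R * R)),
    (forall i, (i < size Cs)%N -> in_Cde d e B (nth (fun _ => false) Cs i)) ->
    (forall i j, (i < j < size Cs)%N -> ~ (nth (fun _ => false) Cs i =1 nth (fun _ => false) Cs j)) ->
    (size Cs < 2 ^ (2 ^ (d + 2)))%N.
Proof.
move=> d0 he hN Cs hC hD.
have hN' := hN; case: hN' => [[uB szB] _ _ _ _].
pose n := size B.
pose f (C : pred (R * R)) : {ffun 'I_n -> bool} := [ffun i : 'I_n => C (nth (0, 0) B (val i))].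
have U : uniq (map f Cs).
  apply/(uniqP (f (fun _ => false))) => i j; rewrite !inE size_map => hi hj.
  rewrite !(nth_map (fun _ => false)) // => hf.
  apply/eqP/negP => nij.
  have agree : forall k l, (k < size Cs)%N -> (l < size Cs)%N ->
      f (nth (fun _ => false) Cs k) = f (nth (fun _ => false) Cs l) ->
      nth (fun _ => false) Cs k =1 nth (fun _ => false) Cs l.
    move=> k l hk hl hkl; apply: (key _ _ _ _ _ _ he hN (hC k hk) (hC l hl)) => x xB.
    have xi : (index x B < n)%N by rewrite index_mem.
    have := congr1 (fun g : {ffun 'I_n -> bool} => g (Ordinal xi)) hkl.
    by rewrite /= !ffunE /= nth_index.
  case: (ltngtP i j) nij => // hij _.
    by apply: (hD i j); rewrite ?hij ?hj //; apply: agree.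
  by apply: (hD j i); rewrite ?hij ?hi //; apply: agree.
have sz : (size Cs <= 2 ^ n)%N.
  rewrite -(size_map f); move/card_uniqP: U => <-.
  apply: leq_trans (max_card _) _.
  by rewrite card_ffun card_bool card_ord.
apply: leq_ltn_trans sz _; rewrite ltn_exp2l //.
have := binle (d + 2) 2; move: szB; rewrite /bnm /n addn2.
move: ('C(d.+2, 2)) => c; lia.
Qed.
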